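(* Let $K$ be a field of characteristic $0$, let $L=\mathcal{L}(x,y)$ be the free Lie algebra over $K$ freely generated by $x,y$, let $\delta$ be the derivation of $L$ with $\delta(x)=0$, $\delta(y)=x$, and $L^\delta=\ker\delta$. Let $f\neq 0$ be an element of $L$ of degree $7$. Then $f\in L^\delta$ if and only if $f$ belongs to the Lie subalgebra of $L$ generated by $x$, $[y,x]$ and $[y,x,x,x,[y,x,y]]-[y,x,x,y,[y,x,x]]$.
   Context: Brackets are left-normed: $[a_1,a_2,\ldots,a_n]=[[\ldots[a_1,a_2],\ldots],a_n]$, and an inner bracket denotes a left-normed element inserted as a single argument. *)

(* Defs.v *)
(* The free Lie algebra L(x,y) over K is realized, as usual,
   as the Lie subalgebra of Lie elements of the free associative algebra
   K<x,y> generated by x and y (bracket [a,b] = ab - ba).  We work inside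
   the algebra K<<x,y>> of all functions (words -> K); the Lie elements
   generated by x, y are automatically finitely supported.  Letters:
   true = x, false = y. *)
From mathcomp Require Import all_boot all_order all_algebra.
Set Implicit Arguments.
Unset Strict Implicit.
Unset Printing Implicit Defensive.
Import GRing.Theory.
Local Open Scope ring_scope.

Definition word := seq bool.
Definition series (K : fieldType) := word -> K.

Section Ops.
Variable K : fieldType.

Definition s0 : series K := fun _ => 0.
Definition sadd (p q : series K) : series K := fun w => p w + q w.
Definition sscale (c : K) (p : series K) : series K := fun w => c * p w.
Definition smul (p q : series K) : series K :=
  fun w => \sum_(i < (size w).+1) p (take i w) * q (drop i w).
Definition sbr (p q : series K) : series K := fun w => smul p q w - smul q p w.
Definition letter (b : bool) : series K := fun w => if w == [:: b] then 1 else 0.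
Definition sx : series K := letter true.
Definition sy : series K := letter false.

(* The derivation delta with delta(x) = 0, delta(y) = x, extended to words:
   delta(w) = sum over positions carrying y of w with that y replaced by x. *)
Definition delta (p : series K) : series K :=
  fun w => \sum_(i < size w | nth false w i) p (set_nth false w i false).

Inductive lie_gen (S : series K -> Prop) : series K -> Prop :=
  | lie_gen_base p : S p -> lie_gen S p
  | lie_gen_zero : lie_gen S s0
  | lie_gen_add p q : lie_gen S p -> lie_gen S q -> lie_gen S (sadd p q)
  | lie_gen_scale c p : lie_gen S p -> lie_gen S (sscale c p)
  | lie_gen_br p q : lie_gen S p -> lie_gen S q -> lie_gen S (sbr p q).

Definition freeLie (p : series K) : Prop := lie_gen (fun q => q = sx \/ q = sy) p.

Definition homog (n : nat) (p : series K) : Prop :=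
  forall w : word, size w <> n -> p w = 0.

Definition g7 : series K :=
  sadd (sbr (sbr (sbr (sbr sy sx) sx) sx) (sbr (sbr sy sx) sy))
       (sscale (-1) (sbr (sbr (sbr (sbr sy sx) sx) sy) (sbr (sbr sy sx) sx))).

Definition gens5p5 (q : series K) : Prop := q = sx \/ q = sbr sy sx \/ q = g7.
End Ops.

(* Main.v *)
From Stdlib Require Import FunctionalExtensionality ZArith.
Require Import Defs.
From mathcomp Require Import all_boot all_order all_algebra.
From mathcomp Require Import ring zify ssrZ.
Set Implicit Arguments.
Unset Strict Implicit.
Unset Printing Implicit Defensive.
Import GRing.Theory.
Local Open Scope ring_scope.


Section Alg.
Variable K : fieldType.
Local Notation ser := (series K).

Definition lq (b : bool) (p : ser) : ser := fun u => p (b :: u).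

Lemma saddE (p q : ser) w : sadd p q w = p w + q w. Proof. by []. Qed.
Lemma sscaleE c (p : ser) w : sscale c p w = c * p w. Proof. by []. Qed.
Lemma sbrE (p q : ser) w : sbr p q w = smul p q w - smul q p w. Proof. by []. Qed.
Lemma s0E w : s0 K w = 0. Proof. by []. Qed.

Lemma smul_nil (p q : ser) : smul p q [::] = p [::] * q [::].
Proof. by rewrite /smul big_ord1. Qed.

Lemma smul_cons (p q : ser) b w :
  smul p q (b :: w) = p [::] * q (b :: w) + smul (lq b p) q w.
Proof. by rewrite /smul big_ord_recl. Qed.

Lemma lq_smul (p q : ser) b :
  lq b (smul p q) = sadd (sscale (p [::]) (lq b q)) (smul (lq b p) q).
Proof. by apply: functional_extensionality => w; rewrite /lq smul_cons. Qed.

Lemma smulDl (p q r : ser) : smul (sadd p q) r = sadd (smul p r) (smul q r).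
Proof.
apply: functional_extensionality => w; rewrite /smul /sadd -big_split /=.
by apply: eq_bigr => i _; rewrite mulrDl.
Qed.

Lemma smulDr (p q r : ser) : smul p (sadd q r) = sadd (smul p q) (smul p r).
Proof.
apply: functional_extensionality => w; rewrite /smul /sadd -big_split /=.
by apply: eq_bigr => i _; rewrite mulrDr.
Qed.

Lemma smulZl c (p q : ser) : smul (sscale c p) q = sscale c (smul p q).
Proof.
apply: functional_extensionality => w; rewrite /smul /sscale mulr_sumr.
by apply: eq_bigr => i _; rewrite mulrA.
Qed.

Lemma smulZr c (p q : ser) : smul p (sscale c q) = sscale c (smul p q).
Proof.
apply: functional_extensionality => w; rewrite /smul /sscale mulr_sumr.
by apply: eq_bigr => i _; rewrite mulrCA.
Qed.

Lemma smulA (p q r : ser) : smul (smul p q) r = smul p (smul q r).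
Proof.
apply: functional_extensionality => w; elim: w p => [|b w IH] p.
  by rewrite !smul_nil mulrA.
rewrite [LHS]smul_cons [RHS]smul_cons lq_smul smulDl smulZl saddE sscaleE IH.
rewrite (smul_nil p q) (smul_cons q r).

ring.
Qed.

Lemma delta_nil (p : ser) : delta p [::] = 0.
Proof. by rewrite /delta big_ord0. Qed.

Lemma delta_cons (p : ser) b w :
  delta p (b :: w) = (if b then p (false :: w) else 0) + delta (lq b p) w.
Proof.
rewrite /delta big_mkcond big_ord_recl /= -big_mkcond /=.
by congr (_ + _).
Qed.

Lemma deltaD (p q : ser) : delta (sadd p q) = sadd (delta p) (delta q).
Proof. by apply: functional_extensionality => w; rewrite /delta /sadd big_split. Qed.

Lemma deltaZ c (p : ser) : delta (sscale c p) = sscale c (delta p).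
Proof. by apply: functional_extensionality => w; rewrite /delta /sscale mulr_sumr. Qed.

Lemma lq_delta (p : ser) b :
  lq b (delta p) = sadd (fun u => if b then p (false :: u) else 0) (delta (lq b p)).
Proof. by apply: functional_extensionality => w; rewrite /lq delta_cons. Qed.

Lemma lqD b (p q : ser) : lq b (sadd p q) = sadd (lq b p) (lq b q). Proof. by []. Qed.
Lemma lqZ b c (p : ser) : lq b (sscale c p) = sscale c (lq b p). Proof. by []. Qed.

Lemma delta_smul (p q : ser) :
  delta (smul p q) = sadd (smul (delta p) q) (smul p (delta q)).
Proof.
apply: functional_extensionality => w; elim: w p => [|b w IH] p.
  by rewrite saddE !smul_nil !delta_nil mul0r mulr0 addr0.
rewrite delta_cons lq_smul deltaD deltaZ saddE sscaleE IH !saddE.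
rewrite (smul_cons (delta p)) (smul_cons p (delta q)) lq_delta smulDl delta_nil mul0r add0r delta_cons !saddE.
case: b.
  rewrite (smul_cons p q).
  have -> : smul (fun u => p (false :: u)) q w = smul (lq false p) q w by [].
  ring.
have -> : smul (fun _ => 0) q w = 0.
  by rewrite /smul big1 // => i _; rewrite mul0r.
ring.
Qed.

End Alg.


Section Lie.
Variable K : fieldType.
Local Notation ser := (series K).
Local Notation fe := functional_extensionality.

Lemma sbr_def (p q : ser) : sbr p q = sadd (smul p q) (sscale (-1) (smul q p)).
Proof. by apply: fe => w; rewrite sbrE saddE sscaleE mulN1r. Qed.

Lemma sbrDl (p q r : ser) : sbr (sadd p q) r = sadd (sbr p r) (sbr q r).
Proof.
by apply: fe => w; rewrite !(saddE, sscaleE, sbrE, smulDl, smulDr, smulZl, smulZr); ring.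
Qed.
Lemma sbrDr (p q r : ser) : sbr p (sadd q r) = sadd (sbr p q) (sbr p r).
Proof.
by apply: fe => w; rewrite !(saddE, sscaleE, sbrE, smulDl, smulDr, smulZl, smulZr); ring.
Qed.
Lemma sbrZl c (p q : ser) : sbr (sscale c p) q = sscale c (sbr p q).
Proof.
by apply: fe => w; rewrite !(saddE, sscaleE, sbrE, smulDl, smulDr, smulZl, smulZr); ring.
Qed.
Lemma sbrZr c (p q : ser) : sbr p (sscale c q) = sscale c (sbr p q).
Proof.
by apply: fe => w; rewrite !(saddE, sscaleE, sbrE, smulDl, smulDr, smulZl, smulZr); ring.
Qed.
Lemma smul0l (p : ser) : smul (s0 K) p = s0 K.
Proof. by apply: fe => w; rewrite /smul big1 // => i _; rewrite s0E mul0r. Qed.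
Lemma smul0r (p : ser) : smul p (s0 K) = s0 K.
Proof. by apply: fe => w; rewrite /smul big1 // => i _; rewrite s0E mulr0. Qed.
Lemma sbr0l (p : ser) : sbr (s0 K) p = s0 K.
Proof. by apply: fe => w; rewrite sbrE smul0l smul0r s0E subrr. Qed.
Lemma sbr0r (p : ser) : sbr p (s0 K) = s0 K.
Proof. by apply: fe => w; rewrite sbrE smul0l smul0r s0E subrr. Qed.

Lemma jacobi (a b e : ser) :
  sbr a (sbr b e) = sadd (sbr (sbr a b) e) (sscale (-1) (sbr (sbr a e) b)).
Proof.
apply: fe => w.
rewrite !sbr_def !(smulDl, smulDr, smulZl, smulZr) !smulA.
rewrite !(saddE, sscaleE).
ring.
Qed.

Inductive lexp := Lleaf of bool | Lbr of lexp & lexp.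
Fixpoint sem (t : lexp) : ser :=
  match t with Lleaf b => letter K b | Lbr a c => sbr (sem a) (sem c) end.
Definition ln (a : bool) (r : word) : lexp :=
  foldl (fun t b => Lbr t (Lleaf b)) (Lleaf a) r.

Inductive spanLN (n : nat) : ser -> Prop :=
  | sp0 : spanLN n (s0 K)
  | spD p q : spanLN n p -> spanLN n q -> spanLN n (sadd p q)
  | spZ c p : spanLN n p -> spanLN n (sscale c p)
  | spB a r : (size r).+1 = n -> spanLN n (sem (ln a r)).

Lemma sp_leaf m p b : spanLN m p -> spanLN m.+1 (sbr p (letter K b)).
Proof.
elim=> [|p1 q1 _ IH1 _ IH2|c p1 _ IH|a r Hr].
- by rewrite sbr0l; exact: sp0.
- by rewrite sbrDl; apply: spD.
- by rewrite sbrZl; apply: spZ.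
- have -> : sbr (sem (ln a r)) (letter K b) = sem (ln a (rcons r b)).
    by rewrite /ln foldl_rcons.
  by apply: spB; rewrite size_rcons Hr.
Qed.

Lemma sp_cast m n p : m = n -> spanLN m p -> spanLN n p.
Proof. by move=> ->. Qed.

Lemma sp_br k q : spanLN k q -> forall m p, spanLN m p -> spanLN (m + k) (sbr p q).
Proof.
elim=> [|q1 q2 _ IH1 _ IH2|c q1 _ IH|c r Hr] m p Hp.
- by rewrite sbr0r; exact: sp0.
- by rewrite sbrDr; apply: spD; [apply: IH1|apply: IH2].
- by rewrite sbrZr; apply: spZ; apply: IH.
elim/last_ind: r k Hr m p Hp => [|r d IHr] k Hr m p Hp.
  by rewrite -Hr addn1; apply: sp_leaf.
rewrite /ln foldl_rcons -/(ln c r) /= jacobi.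
rewrite size_rcons in Hr.
apply: spD.
  apply: (sp_cast (m := (m + (size r).+1).+1)); first by lia.
  by apply: sp_leaf; apply: IHr.
apply: spZ.
apply: (sp_cast (m := (m.+1 + (size r).+1))); first by lia.
by apply: IHr => //; apply: sp_leaf.
Qed.

End Lie.


Section Trunc.
Variable K : fieldType.
Local Notation ser := (series K).
Local Notation fe := functional_extensionality.

Definition trunc (n : nat) (p : ser) : ser := fun w => if size w == n then p w else 0.

Lemma trunc_smul n (p q : ser) w :
  trunc n (smul p q) w = \sum_(i < n.+1) smul (trunc i p) (trunc (n - i) q) w.
Proof.
rewrite /smul exchange_big /=.
have E : forall j : 'I_(size w).+1, forall i : 'I_n.+1,
   trunc i p (take j w) * trunc (n - i) q (drop j w) =
   if (i == j :> nat) && (size w == n) then p (take j w) * q (drop j w) else 0.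
  move=> j i; rewrite /trunc size_takel ?size_drop; last by rewrite -ltnS.
  have Hj := ltn_ord j; have Hi := ltn_ord i.
  case: (eqVneq (i : nat) j) => [Eij|Nij]; last first.
    by rewrite mul0r.
  rewrite Eij /=.
  have -> : (size w - j == n - j)%N = (size w == n) by apply/eqP/eqP; lia.
  by case: (size w == n); rewrite ?mulr0.
under eq_bigr do under eq_bigr do rewrite E.
rewrite /trunc; case: eqP => Hw.
  apply: eq_bigr => j _.
  under eq_bigr do rewrite andbT.
  rewrite -big_mkcond /= (big_ord1_eq _ (fun _ => p (take j w) * q (drop j w)) j n.+1).
  by have := ltn_ord j; rewrite {2}Hw => ->.
rewrite big1 // => j _; rewrite big1 // => i _.
by rewrite andbF.
Qed.


Lemma trunc_sbr n (p q : ser) :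
  trunc n (sbr p q) = (fun w => \sum_(i < n.+1) sbr (trunc i p) (trunc (n - i) q) w).
Proof.
apply: fe => w.
have -> : trunc n (sbr p q) w = trunc n (smul p q) w - trunc n (smul q p) w.
  by rewrite /trunc sbrE; case: (size w == n); rewrite ?subr0.
rewrite !trunc_smul.
under [X in _ = X]eq_bigr do rewrite sbrE.
rewrite sumrB; congr (_ - _).
rewrite (reindex_inj rev_ord_inj) /=.
apply: eq_bigr => i _.
have Hi := ltn_ord i.
have -> : (n.+1 - i.+1 = n - i)%N by lia.
have -> : (n - (n - i) = i)%N by lia.
by [].
Qed.

Lemma sp_sum n m (F : 'I_m -> ser) :
  (forall i, spanLN n (F i)) -> spanLN n (fun w => \sum_(i < m) F i w).
Proof.
elim: m F => [|m IH] F HF.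
  have -> : (fun w => \sum_(i < 0) F i w) = s0 K.
    by apply: fe => w; rewrite big_ord0.
  exact: sp0.
have -> : (fun w => \sum_(i < m.+1) F i w) =
   sadd (fun w => \sum_(i < m) F (widen_ord (leqnSn m) i) w) (F ord_max).
  by apply: fe => w; rewrite big_ord_recr saddE.
by apply: spD; [apply: IH => i|].
Qed.

Lemma trunc_letter n b :
  trunc n (letter K b) = if n == 1%N then letter K b else s0 K.
Proof.
apply: fe => w; rewrite /trunc /letter.
case: (eqVneq w [:: b]) => [->|Nw] /=.
  by rewrite eq_sym; case: (n == 1%N) => /=; rewrite ?eqxx.
by case: (size w == n); case: (n == 1%N); rewrite /= ?(negbTE Nw).
Qed.

Lemma lie_trunc p : freeLie p -> forall n, spanLN n (trunc n p).
Proof.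
elim=> [q Hq|| p1 q1 _ IH1 _ IH2|c p1 _ IH|p1 q1 _ IH1 _ IH2] n.
- have [b ->] : exists b, q = letter K b by case: Hq => ->; [exists true|exists false].
  rewrite trunc_letter; case: eqP => [->|_]; last exact: sp0.
  by apply: (@spB _ 1 b [::]).
- have -> : trunc n (s0 K) = s0 K by apply: fe => w; rewrite /trunc; case: ifP.
  exact: sp0.
- have -> : trunc n (sadd p1 q1) = sadd (trunc n p1) (trunc n q1).
    by apply: fe => w; rewrite /trunc !saddE; case: ifP; rewrite ?addr0.
  by apply: spD.
- have -> : trunc n (sscale c p1) = sscale c (trunc n p1).
    by apply: fe => w; rewrite /trunc !sscaleE; case: ifP; rewrite ?mulr0.
  by apply: spZ.
- rewrite trunc_sbr; apply: sp_sum => i.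
  have Hi := ltn_ord i.
  apply: (sp_cast (m := (i + (n - i))%N)); first by lia.
  by apply: sp_br.
Qed.

End Trunc.


Fixpoint deg (t : lexp) : nat :=
  match t with Lleaf _ => 1%N | Lbr a c => (deg a + deg c)%N end.

Fixpoint isem (t : lexp) (w : word) : Z :=
  match t with
  | Lleaf b => if w == [:: b] then 1 else 0
  | Lbr a c => if size w == (deg a + deg c)%N then
       isem a (take (deg a) w) * isem c (drop (deg a) w)
       - isem c (take (deg c) w) * isem a (drop (deg c) w) else 0
  end.

Lemma isem_deg t w : size w != deg t -> isem t w = 0.
Proof.
case: t => [b|a c] /= H; last by rewrite (negbTE H).
by case: eqP => // Ew; move: H; rewrite Ew.
Qed.

Section Model.
Variable K : fieldType.
Local Notation ser := (series K).
Local Notation fe := functional_extensionality.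

Definition zK (z : Z) : K := (int_of_Z z)%:~R.
Lemma zKD a b : zK (a + b) = zK a + zK b.
Proof. by rewrite /zK rmorphD intrD. Qed.
Lemma zKB a b : zK (a - b) = zK a - zK b.
Proof. by rewrite /zK rmorphB intrB. Qed.
Lemma zKM a b : zK (a * b) = zK a * zK b.
Proof. by rewrite /zK rmorphM intrM. Qed.
Lemma zK0 : zK 0 = 0. Proof. by []. Qed.
Lemma zK1 : zK 1 = 1. Proof. by []. Qed.

End Model.
Section M2.
Variable K : fieldType.
Local Notation ser := (series K).
Lemma smul_homog (p q : ser) (d : nat) w : (forall u, size u != d -> p u = 0) ->
  smul p q w = if (d <= size w)%N then p (take d w) * q (drop d w) else 0.
Proof.
move=> Hp; rewrite /smul.
have -> : \sum_(i < (size w).+1) p (take i w) * q (drop i w) =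
          \sum_(i < (size w).+1 | i == d :> nat) p (take d w) * q (drop d w).
  rewrite [RHS]big_mkcond; apply: eq_bigr => i _.
  case: eqP => [->//|Nid].
  have Hi := ltn_ord i.
  rewrite Hp ?mul0r //.
  rewrite size_takel; last by rewrite -ltnS.
  by apply/eqP.
by rewrite (big_ord1_eq _ (fun _ => p (take d w) * q (drop d w)) d (size w).+1) ltnS.
Qed.

Local Notation fe := functional_extensionality.
Lemma sem_isem t : sem K t = fun w => zK K (isem t w).
Proof.
elim: t => [b|a IHa c IHc] /=; apply: fe => w.
  by rewrite /letter; case: ifP.
have Ha : forall u, size u != deg a -> sem K a u = 0.
  by move=> u Hu; rewrite IHa isem_deg.
have Hc : forall u, size u != deg c -> sem K c u = 0.
  by move=> u Hu; rewrite IHc isem_deg.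
rewrite sbrE (smul_homog _ _ Ha) (smul_homog _ _ Hc).
case: eqP => Hw.
  rewrite Hw leq_addr leq_addl zKB !zKM IHa IHc.
  reflexivity.
rewrite zK0.
have Hd : forall (p q : ser) d e, (forall u, size u != e -> q u = 0) ->
   size w <> (d + e)%N ->
   (if (d <= size w)%N then p (take d w) * q (drop d w) else 0) = 0.
  move=> p q d e Hq Hne; case: ifP => // Hle.
  by rewrite Hq ?mulr0 // size_drop; apply/eqP; lia.
rewrite (Hd _ _ _ _ Hc) ?(Hd _ _ _ _ Ha) ?subr0 //; lia.
Qed.
End M2.


Fixpoint allw (n : nat) : seq word :=
  match n with 0 => [:: [::]] | n.+1 => [seq true :: w | w <- allw n] ++ [seq false :: w | w <- allw n] end.

Lemma mem_consmap (c : bool) (s : seq word) w :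
  (w \in [seq c :: u | u <- s]) = if w is b :: w' then (b == c) && (w' \in s) else false.
Proof.
elim: s => [|u s IH] /=; first by case: w => // b w'; rewrite andbF.
rewrite in_cons IH; clear IH; case: w => // b w'.
by rewrite eqE /= andb_orr.
Qed.

Lemma mem_allw n w : (w \in allw n) = (size w == n).
Proof.
elim: n w => [|n IH] [|b w] //=.
  by rewrite mem_cat !mem_consmap.
by rewrite mem_cat !mem_consmap IH eqSS; case: b => //=; rewrite orbF.
Qed.

Definition W7 := allw 7.

Definition ln7 (v : word) : lexp := match v with a :: r => ln a r | [::] => Lleaf true end.

Fixpoint idelta (h : word -> Z) (w : word) : Z :=
  match w with
  | [::] => 0
  | b :: w' => (if b then h (false :: w') else 0) + idelta (fun u => h (b :: u)) w'
  end.

Definition Lx := Lleaf true.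
Definition Ly := Lleaf false.
Definition Lu := Lbr Ly Lx.
Definition tk0 := Lbr (Lbr (Lbr (Lbr (Lbr Lu Lx) Lx) Lx) Lx) Lx.
Definition tk1 := Lbr (Lbr (Lbr (Lbr Lu Lx) Lx) Lx) Lu.
Definition tk2 := Lbr (Lbr (Lbr (Lbr Lu Lx) Lx) Lu) Lx.
Definition tk3 := Lbr (Lbr (Lbr Lu Lx) Lu) Lu.
Definition t5 := Lbr (Lbr (Lbr Lu Lx) Lx) (Lbr Lu Ly).
Definition t6 := Lbr (Lbr (Lbr Lu Lx) Ly) (Lbr Lu Lx).

Definition kz (j : nat) (w : word) : Z :=
  match j with
  | 0 => isem tk0 w | 1 => isem tk1 w | 2 => isem tk2 w | 3 => isem tk3 w
  | _ => isem t5 w - isem t6 w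
  end.

Definition sumZ (n : nat) (F : nat -> Z) : Z := foldr (fun j acc => F j + acc) 0 (iota 0 n).

Local Open Scope Z_scope.
Definition Nz : Z := 60.
Definition Mrows : seq (seq Z) := [::
  [:: 0; 0; 0; 0; 0; 0; 0; 0; 0; 0; 0; 0; 0];
  [:: 0; 0; 0; 0; 0; 0; 0; 0; 0; 0; 0; 0; 0];
  [:: 0; 0; 0; 0; 0; 0; 0; 0; 0; 0; 0; 0; 0];
  [:: (-60); 0; 0; 0; 0; 0; 0; 0; 0; 0; 0; 0; 0];
  [:: 0; 0; 0; 0; 0; 0; 0; 0; 0; 0; 0; 0; 0];
  [:: 0; 0; 0; 0; 0; 0; 0; 0; 0; 0; 0; 0; 0];
  [:: 300; 0; 0; 0; 0; 0; 0; 0; 0; 0; 0; 0; 0];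
  [:: 0; (-30); 0; 0; 0; 0; 0; 0; 0; 0; 0; 0; 0];
  [:: 0; 0; 0; 0; 0; 0; 0; 0; 0; 0; 0; 0; 0];
  [:: 0; 0; 0; 0; 0; 0; 0; 0; 0; 0; 0; 0; 0];
  [:: 0; 0; 0; 0; 0; 0; 0; 0; 0; 0; 0; 0; 0];
  [:: 0; 0; 0; 0; 0; 0; 0; 0; 0; 0; 0; 0; 0];
  [:: (-600); 0; 0; 0; 0; 0; 0; 0; 0; 0; 0; 0; 0];
  [:: 0; (-30); (-60); 0; 0; 0; 0; 0; 0; 0; 0; 0; 0];
  [:: 0; 150; 60; 0; 0; 0; 0; 0; 0; 0; 0; 0; 0];
  [:: 0; 0; 0; (-20); 0; 0; 0; 0; 0; 0; 0; 0; 0];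
  [:: 0; 0; 0; 0; 0; 0; 0; 0; 0; 0; 0; 0; 0];
  [:: 1200; 0; 0; 0; 0; 0; 0; 0; 0; 0; 0; 0; 0];
  [:: (-3600); 0; 0; 0; 0; 0; 0; 0; 0; 0; 0; 0; 0];
  [:: 0; 660; 240; 0; 60; 0; 0; 0; 0; 0; 0; 0; 0];
  [:: 3600; 0; 0; 0; 0; 0; 0; 0; 0; 0; 0; 0; 0];
  [:: 0; 0; 0; 0; 0; 0; 0; 0; 0; 0; 0; 0; 0];
  [:: 0; (-1320); (-480); 0; (-120); 0; 0; 0; 0; 0; 0; 0; 0];
  [:: 0; 0; 0; (-220); 0; (-120); 0; 0; (-30); 0; 0; 0; 0];
  [:: (-600); 0; 0; 0; 0; 0; 0; 0; 0; 0; 0; 0; 0];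
  [:: 0; (-1350); (-540); 0; (-180); 0; 0; 0; 0; 0; 0; 0; 0];
  [:: 0; 2790; 1260; 0; 360; 0; 0; 0; 0; 0; 0; 0; 0];
  [:: 0; 0; 0; 640; 0; 300; 0; 0; 90; 0; 0; 0; 0];
  [:: 0; (-960); (-480); 0; (-120); 0; 0; 0; 0; 0; 0; 0; 0];
  [:: 0; 0; 0; (-650); 0; (-300); (-30); 0; (-90); 0; 0; 0; 0];
  [:: 0; 0; 0; 290; 0; 120; 30; 0; 30; 0; 0; 0; 0];
  [:: 0; 0; 0; 0; 0; 0; 0; (-15); 0; 0; 0; 0; 0];
  [:: 0; 0; 0; 0; 0; 0; 0; 0; 0; 0; 0; 0; 0];
  [:: (-1800); 0; 0; 0; 0; 0; 0; 0; 0; 0; 0; 0; 0];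
  [:: 4800; 0; 0; 0; 0; 0; 0; 0; 0; 0; 0; 0; 0];
  [:: 0; (-930); (-420); 0; (-120); 0; 0; 0; 0; 0; 0; 0; 0];
  [:: (-3600); 0; 0; 0; 0; 0; 0; 0; 0; 0; 0; 0; 0];
  [:: 0; (-2460); (-600); 0; (-240); 0; 0; 0; 0; 0; 0; 0; 0];
  [:: 0; 3930; 1380; 0; 480; 0; 0; 0; 0; 0; 0; 0; 0];
  [:: 0; 0; 0; 710; 0; 300; 30; 0; 60; 0; 0; 0; 0];
  [:: 0; 0; 0; 0; 0; 0; 0; 0; 0; 0; 0; 0; 0];
  [:: 0; 7860; 2760; 0; 960; 0; 0; 0; 0; 0; 0; 0; 0];
  [:: 0; (-10800); (-4320); 0; (-1440); 0; 0; 0; 0; 0; 0; 0; 0];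
  [:: 0; 0; 0; (-2210); 0; (-1020); (-210); 0; (-300); (-60); 0; 0; 0];
  [:: 0; 2790; 1260; 0; 360; 0; 0; 0; 0; 0; 0; 0; 0];
  [:: 0; 0; 0; 3340; 0; 1800; 660; 0; 660; 240; 0; 0; 0];
  [:: 0; 0; 0; (-2110); 0; (-1140); (-510); 0; (-420); (-180); 0; 0; 0];
  [:: 0; 0; 0; 0; 0; 0; 0; (-280); 0; 0; (-140); 20; 0];
  [:: 300; 0; 0; 0; 0; 0; 0; 0; 0; 0; 0; 0; 0];
  [:: 0; (-3030); (-1020); 0; (-360); 0; 0; 0; 0; 0; 0; 0; 0];
  [:: 0; 3930; 1380; 0; 480; 0; 0; 0; 0; 0; 0; 0; 0];
  [:: 0; 0; 0; 500; 0; 300; 120; 0; 120; 60; 0; 0; 0];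
  [:: 0; (-1320); (-480); 0; (-120); 0; 0; 0; 0; 0; 0; 0; 0];
  [:: 0; 0; 0; (-3130); 0; (-1980); (-930); 0; (-840); (-420); 0; 0; 0];
  [:: 0; 0; 0; 3060; 0; 1800; 900; 0; 720; 360; 0; 0; 0];
  [:: 0; 0; 0; 0; 0; 0; 0; 1105; 0; 0; 500; (-80); 0];
  [:: 0; 150; 60; 0; 0; 0; 0; 0; 0; 0; 0; 0; 0];
  [:: 0; 0; 0; 1600; 0; 960; 420; 0; 390; 180; 0; 0; 0];
  [:: 0; 0; 0; (-2110); 0; (-1140); (-510); 0; (-420); (-180); 0; 0; 0];
  [:: 0; 0; 0; 0; 0; 0; 0; (-1320); 0; 0; (-600); 120; 0];
  [:: 0; 0; 0; 290; 0; 120; 30; 0; 30; 0; 0; 0; 0];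
  [:: 0; 0; 0; 0; 0; 0; 0; 875; 0; 0; 400; (-100); 0];
  [:: 0; 0; 0; 0; 0; 0; 0; (-350); 0; 0; (-160); 40; 0];
  [:: 0; 0; 0; 0; 0; 0; 0; 0; 0; 0; 0; 0; (-12)];
  [:: 0; 0; 0; 0; 0; 0; 0; 0; 0; 0; 0; 0; 0];
  [:: 720; 0; 0; 0; 0; 0; 0; 0; 0; 0; 0; 0; 0];
  [:: (-1800); 0; 0; 0; 0; 0; 0; 0; 0; 0; 0; 0; 0];
  [:: 0; 360; 180; 0; 60; 0; 0; 0; 0; 0; 0; 0; 0];
  [:: 1200; 0; 0; 0; 0; 0; 0; 0; 0; 0; 0; 0; 0];
  [:: 0; 2520; 720; 0; 240; 0; 0; 0; 0; 0; 0; 0; 0];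
  [:: 0; (-3030); (-1020); 0; (-360); 0; 0; 0; 0; 0; 0; 0; 0];
  [:: 0; 0; 0; (-410); 0; (-180); (-30); 0; (-30); 0; 0; 0; 0];
  [:: 0; 0; 0; 0; 0; 0; 0; 0; 0; 0; 0; 0; 0];
  [:: 0; (-6480); (-2160); 0; (-720); 0; 0; 0; 0; 0; 0; 0; 0];
  [:: 0; 7860; 2760; 0; 960; 0; 0; 0; 0; 0; 0; 0; 0];
  [:: 0; 0; 0; 1590; 0; 780; 210; 0; 210; 60; 0; 0; 0];
  [:: 0; (-1350); (-540); 0; (-180); 0; 0; 0; 0; 0; 0; 0; 0];
  [:: 0; 0; 0; (-2670); 0; (-1500); (-570); 0; (-570); (-240); 0; 0; 0];
  [:: 0; 0; 0; 1600; 0; 960; 420; 0; 390; 180; 0; 0; 0];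
  [:: 0; 0; 0; 0; 0; 0; 0; 355; 0; 0; 140; (-20); 0];
  [:: 0; 0; 0; 0; 0; 0; 0; 0; 0; 0; 0; 0; 0];
  [:: 0; 2520; 720; 0; 240; 0; 0; 0; 0; 0; 0; 0; 0];
  [:: 0; (-2460); (-600); 0; (-240); 0; 0; 0; 0; 0; 0; 0; 0];
  [:: 0; 0; 0; (-920); 0; (-480); (-120); 0; (-120); (-60); 0; 0; 0];
  [:: 0; 0; 0; 0; 0; 0; 0; 0; 0; 0; 0; 0; 0];
  [:: 0; 0; 0; 4000; 0; 2400; 960; 0; 960; 480; 0; 0; 0];
  [:: 0; 0; 0; (-3130); 0; (-1980); (-930); 0; (-840); (-420); 0; 0; 0];
  [:: 0; 0; 0; 0; 0; 0; 0; (-1090); 0; 0; (-440); 80; 0];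
  [:: 0; (-30); (-60); 0; 0; 0; 0; 0; 0; 0; 0; 0; 0];
  [:: 0; 0; 0; (-2670); 0; (-1500); (-570); 0; (-570); (-240); 0; 0; 0];
  [:: 0; 0; 0; 3340; 0; 1800; 660; 0; 660; 240; 0; 0; 0];
  [:: 0; 0; 0; 0; 0; 0; 0; 645; 0; 0; 300; (-120); 0];
  [:: 0; 0; 0; (-650); 0; (-300); (-30); 0; (-90); 0; 0; 0; 0];
  [:: 0; 0; 0; 0; 0; 0; 0; (-860); 0; 0; (-400); 160; 0];
  [:: 0; 0; 0; 0; 0; 0; 0; 875; 0; 0; 400; (-100); 0];
  [:: 0; 0; 0; 0; 0; 0; 0; 0; 0; 0; 0; 0; 72];
  [:: (-60); 0; 0; 0; 0; 0; 0; 0; 0; 0; 0; 0; 0];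
  [:: 0; 360; 180; 0; 60; 0; 0; 0; 0; 0; 0; 0; 0];
  [:: 0; (-930); (-420); 0; (-120); 0; 0; 0; 0; 0; 0; 0; 0];
  [:: 0; 0; 0; 280; 0; 120; 0; 0; 0; 0; 0; 0; 0];
  [:: 0; 660; 240; 0; 60; 0; 0; 0; 0; 0; 0; 0; 0];
  [:: 0; 0; 0; (-920); 0; (-480); (-120); 0; (-120); (-60); 0; 0; 0];
  [:: 0; 0; 0; 500; 0; 300; 120; 0; 120; 60; 0; 0; 0];
  [:: 0; 0; 0; 0; 0; 0; 0; (-165); 0; 0; (-60); 0; 0];
  [:: 0; 0; 0; 0; 0; 0; 0; 0; 0; 0; 0; 0; 0];
  [:: 0; 0; 0; 1590; 0; 780; 210; 0; 210; 60; 0; 0; 0];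
  [:: 0; 0; 0; (-2210); 0; (-1020); (-210); 0; (-300); (-60); 0; 0; 0];
  [:: 0; 0; 0; 0; 0; 0; 0; 990; 0; 0; 360; 0; 0];
  [:: 0; 0; 0; 640; 0; 300; 0; 0; 90; 0; 0; 0; 0];
  [:: 0; 0; 0; 0; 0; 0; 0; 645; 0; 0; 300; (-120); 0];
  [:: 0; 0; 0; 0; 0; 0; 0; (-1320); 0; 0; (-600); 120; 0];
  [:: 0; 0; 0; 0; 0; 0; 0; 0; 0; 0; 0; 0; (-180)];
  [:: 0; (-30); 0; 0; 0; 0; 0; 0; 0; 0; 0; 0; 0];
  [:: 0; 0; 0; (-410); 0; (-180); (-30); 0; (-30); 0; 0; 0; 0];
  [:: 0; 0; 0; 710; 0; 300; 30; 0; 60; 0; 0; 0; 0];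
  [:: 0; 0; 0; 0; 0; 0; 0; (-165); 0; 0; (-60); 0; 0];
  [:: 0; 0; 0; (-220); 0; (-120); 0; 0; (-30); 0; 0; 0; 0];
  [:: 0; 0; 0; 0; 0; 0; 0; (-1090); 0; 0; (-440); 80; 0];
  [:: 0; 0; 0; 0; 0; 0; 0; 1105; 0; 0; 500; (-80); 0];
  [:: 0; 0; 0; 0; 0; 0; 0; 0; 0; 0; 0; 0; 240];
  [:: 0; 0; 0; (-20); 0; 0; 0; 0; 0; 0; 0; 0; 0];
  [:: 0; 0; 0; 0; 0; 0; 0; 355; 0; 0; 140; (-20); 0];
  [:: 0; 0; 0; 0; 0; 0; 0; (-280); 0; 0; (-140); 20; 0];
  [:: 0; 0; 0; 0; 0; 0; 0; 0; 0; 0; 0; 0; (-180)];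
  [:: 0; 0; 0; 0; 0; 0; 0; (-15); 0; 0; 0; 0; 0];
  [:: 0; 0; 0; 0; 0; 0; 0; 0; 0; 0; 0; 0; 72];
  [:: 0; 0; 0; 0; 0; 0; 0; 0; 0; 0; 0; 0; (-12)];
  [:: 0; 0; 0; 0; 0; 0; 0; 0; 0; 0; 0; 0; 0]].
Definition Dcols : seq (seq Z) := [::
  [:: 0; 0; 0; 0; 0];
  [:: 0; 0; 0; 0; 0];
  [:: 0; 0; 0; 0; 0];
  [:: 0; 0; 0; 0; 0];
  [:: 0; 0; 0; 0; 0];
  [:: 0; 0; 0; 0; 0];
  [:: 0; 0; 0; 0; 0];
  [:: 0; 0; 0; 0; 0];
  [:: 0; 0; 0; 0; 0];
  [:: 0; 0; 0; 0; 0];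
  [:: 0; 0; 0; 0; 0];
  [:: 0; 0; 0; 0; 0];
  [:: 0; 0; 0; 0; 0];
  [:: 0; 0; 0; 0; 0];
  [:: 0; 0; 0; 0; 0];
  [:: 0; 0; 0; 0; 0];
  [:: 0; 0; 0; 0; 0];
  [:: 0; 0; 0; 0; 0];
  [:: 0; 0; 0; 0; 0];
  [:: 0; 0; 0; 0; 0];
  [:: 0; 0; 0; 0; 0];
  [:: 0; 0; 0; 0; 0];
  [:: 0; 0; 0; 0; 0];
  [:: 0; 0; 0; 0; 0];
  [:: 0; 0; 0; 0; 0];
  [:: 0; 0; 0; 0; 0];
  [:: 0; 0; 0; 0; 0];
  [:: 0; 0; 0; 0; 0];
  [:: 0; 0; 0; 0; 0];
  [:: 0; 0; 0; 0; 0];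
  [:: 0; 0; 0; 0; 0];
  [:: 0; 0; 0; 0; 0];
  [:: (-60); 0; 0; 0; 0];
  [:: 0; (-300); 600; 0; 0];
  [:: 0; (-360); 600; 0; 0];
  [:: 0; 0; 0; (-960); 240];
  [:: 0; (-360); 540; 0; 0];
  [:: 0; 0; 0; (-900); 180];
  [:: 0; 0; 0; (-720); 180];
  [:: 0; 0; 0; 0; 0];
  [:: 0; (-360); 480; 0; 0];
  [:: 0; 0; 0; (-840); 120];
  [:: 0; 0; 0; (-720); 120];
  [:: 0; 0; 0; 0; 0];
  [:: 0; 0; 0; (-720); 120];
  [:: 0; 0; 0; 0; 0];
  [:: 0; 0; 0; 0; 0];
  [:: 0; 0; 0; 0; 0];
  [:: 0; (-360); 480; 0; 0];
  [:: 0; 0; 0; (-840); 120];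
  [:: 0; 0; 0; (-720); 120];
  [:: 0; 0; 0; 0; 0];
  [:: 0; 0; 0; (-720); 120];
  [:: 0; 0; 0; 0; 0];
  [:: 0; 0; 0; 0; 0];
  [:: 0; 0; 0; 0; 0];
  [:: 0; 0; 0; (-720); 180];
  [:: 0; 0; 0; 0; 0];
  [:: 0; 0; 0; 0; 0];
  [:: 0; 0; 0; 0; 0];
  [:: 0; 0; 0; 0; 0];
  [:: 0; 0; 0; 0; 0];
  [:: 0; 0; 0; 0; 0];
  [:: 0; 0; 0; 0; 0];
  [:: 60; 0; 0; 0; 0];
  [:: 0; 300; (-600); 0; 0];
  [:: 0; 360; (-600); 0; 0];
  [:: 0; 0; 0; 960; (-240)];
  [:: 0; 360; (-540); 0; 0];
  [:: 0; 0; 0; 900; (-180)];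
  [:: 0; 0; 0; 720; (-180)];
  [:: 0; 0; 0; 0; 0];
  [:: 0; 360; (-480); 0; 0];
  [:: 0; 0; 0; 840; (-120)];
  [:: 0; 0; 0; 720; (-120)];
  [:: 0; 0; 0; 0; 0];
  [:: 0; 0; 0; 720; (-120)];
  [:: 0; 0; 0; 0; 0];
  [:: 0; 0; 0; 0; 0];
  [:: 0; 0; 0; 0; 0];
  [:: 0; 360; (-480); 0; 0];
  [:: 0; 0; 0; 840; (-120)];
  [:: 0; 0; 0; 720; (-120)];
  [:: 0; 0; 0; 0; 0];
  [:: 0; 0; 0; 720; (-120)];
  [:: 0; 0; 0; 0; 0];
  [:: 0; 0; 0; 0; 0];
  [:: 0; 0; 0; 0; 0];
  [:: 0; 0; 0; 720; (-180)];
  [:: 0; 0; 0; 0; 0];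
  [:: 0; 0; 0; 0; 0];
  [:: 0; 0; 0; 0; 0];
  [:: 0; 0; 0; 0; 0];
  [:: 0; 0; 0; 0; 0];
  [:: 0; 0; 0; 0; 0];
  [:: 0; 0; 0; 0; 0];
  [:: 0; 0; 0; 0; 0];
  [:: 0; 0; 0; 0; 0];
  [:: 0; 0; 0; 0; 0];
  [:: 0; 0; 0; 0; 0];
  [:: 0; 0; 0; 0; 0];
  [:: 0; 0; 0; 0; 0];
  [:: 0; 0; 0; 0; 0];
  [:: 0; 0; 0; 0; 0];
  [:: 0; 0; 0; 0; 0];
  [:: 0; 0; 0; 0; 0];
  [:: 0; 0; 0; 0; 0];
  [:: 0; 0; 0; 0; 0];
  [:: 0; 0; 0; 0; 0];
  [:: 0; 0; 0; 0; 0];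
  [:: 0; 0; 0; 0; 0];
  [:: 0; 0; 0; 0; 0];
  [:: 0; 0; 0; 0; 0];
  [:: 0; 0; 0; 0; 0];
  [:: 0; 0; 0; 0; 0];
  [:: 0; 0; 0; 0; 0];
  [:: 0; 0; 0; 0; 0];
  [:: 0; 0; 0; 0; 0];
  [:: 0; 0; 0; 0; 0];
  [:: 0; 0; 0; 0; 0];
  [:: 0; 0; 0; 0; 0];
  [:: 0; 0; 0; 0; 0];
  [:: 0; 0; 0; 0; 0];
  [:: 0; 0; 0; 0; 0];
  [:: 0; 0; 0; 0; 0];
  [:: 0; 0; 0; 0; 0];
  [:: 0; 0; 0; 0; 0];
  [:: 0; 0; 0; 0; 0]].
Definition bas : seq word := [::
  [:: true; true; true; true; true; true; false];
  [:: true; true; true; true; true; false; false];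
  [:: true; true; true; true; false; true; false];
  [:: true; true; true; true; false; false; false];
  [:: true; true; true; false; true; true; false];
  [:: true; true; true; false; true; false; false];
  [:: true; true; true; false; false; true; false];
  [:: true; true; true; false; false; false; false];
  [:: true; true; false; true; true; false; false];
  [:: true; true; false; true; false; true; false];
  [:: true; true; false; true; false; false; false];
  [:: true; true; false; false; false; true; false];
  [:: true; true; false; false; false; false; false]].
Local Close Scope Z_scope.

Definition Lm := [seq [seq isem (ln7 v) w | v <- W7] | w <- W7].
Definition Km := [seq [seq kz j w | j <- iota 0 5] | w <- W7].
Definition Erows := [seq [seq idelta (isem (ln7 v)) e | v <- W7] | e <- bas].

Definition check_fun (Lm Km Er Dc Mr : seq (seq Z)) : bool :=
  all (fun i => all (fun k =>
    Nz * nth 0 (nth [::] Lm i) k - sumZ 5 (fun j => nth 0 (nth [::] Dc k) j * nth 0 (nth [::] Km i) j)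
    == sumZ 13 (fun l => nth 0 (nth [::] Mr i) l * nth 0 (nth [::] Er l) k)) (iota 0 128)) (iota 0 128).

Lemma check_ok : check_fun Lm Km Erows Dcols Mrows = true.
Proof. Time vm_compute. reflexivity. Qed.


Lemma sumZ_big n F : sumZ n F = \sum_(j < n) F j.
Proof.
rewrite /sumZ -(big_mkord xpredT) /index_iota subn0.
by elim: (iota 0 n) => [|a s IH] /=; rewrite ?big_nil ?big_cons ?IH.
Qed.

Lemma size_W7 : size W7 = 128%N. Proof. by vm_compute. Qed.

Lemma idelta_ext h h' w : (forall u, size u = size w -> h u = h' u) -> idelta h w = idelta h' w.
Proof.
elim: w h h' => [|b w IH] h h' H //=.
rewrite H //; congr (_ + _); apply: IH => u Hu; apply: H => /=; by rewrite Hu.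
Qed.

Lemma idelta0 w : idelta (fun _ => 0) w = 0.
Proof.
elim: w => [|b w IH] //=.
by rewrite IH; case: b.
Qed.

Section Glue.
Variable K : fieldType.
Local Notation ser := (series K).
Local Notation fe := functional_extensionality.

Lemma delta_model (h : word -> Z) w : delta (fun u => zK K (h u)) w = zK K (idelta h w).
Proof.
elim: w h => [|b w IH] h; first by rewrite delta_nil.
rewrite delta_cons /= zKD.
have -> : lq b (fun u => zK K (h u)) = (fun u => zK K (h (b :: u))) by [].
by rewrite IH; case: b.
Qed.

Lemma delta_sum m (c : nat -> K) (g : nat -> ser) e :
  delta (fun w => \sum_(k < m) c k * g k w) e = \sum_(k < m) c k * delta (g k) e.
Proof.
rewrite /delta exchange_big /=; apply: eq_bigr => k _.
by rewrite mulr_sumr.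
Qed.

Lemma span_coef (f : ser) : spanLN 7 f ->
  exists c : nat -> K, f = fun w => \sum_(k < 128) c k * sem K (ln7 (nth [::] W7 k)) w.
Proof.
elim=> [|p q _ [c1 ->] _ [c2 ->]|a p _ [c ->]|a r Hr].
- exists (fun _ => 0); apply: fe => w; rewrite s0E big1 // => k _; by rewrite mul0r.
- exists (fun k => c1 k + c2 k); apply: fe => w; rewrite saddE -big_split /=.
  by apply: eq_bigr => k _; rewrite mulrDl.
- exists (fun k => a * c k); apply: fe => w; rewrite sscaleE mulr_sumr.
  by apply: eq_bigr => k _; rewrite mulrA.
- have Hin : (a :: r) \in W7 by rewrite mem_allw /= Hr.
  set k0 := index (a :: r) W7.
  have Hk0 : (k0 < 128)%N by rewrite -size_W7 index_mem.
  exists (fun k => if k == k0 then 1 else 0); apply: fe => w.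
  have -> : \sum_(k < 128) (if (k : nat) == k0 then 1 else 0) * sem K (ln7 (nth [::] W7 k)) w
          = \sum_(k < 128 | (k : nat) == k0) sem K (ln7 (nth [::] W7 k0)) w.
    rewrite [RHS]big_mkcond; apply: eq_bigr => k _.
    by case: eqP => [->|]; rewrite ?mul1r ?mul0r.
  rewrite (big_ord1_eq _ (fun _ => sem K (ln7 (nth [::] W7 k0)) w) k0 128) Hk0.
  by rewrite nth_index.
Qed.

End Glue.


Section Final.
Variable K : fieldType.
Local Notation ser := (series K).
Local Notation fe := functional_extensionality.

Lemma zK_sum n (F : nat -> Z) : zK K (\sum_(j < n) F j) = \sum_(j < n) zK K (F j).
Proof.
elim: n => [|n IH]; first by rewrite !big_ord0.
by rewrite !big_ord_recr /= zKD IH.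
Qed.

Lemma zK_sumZ n (F : nat -> Z) : zK K (sumZ n F) = \sum_(j < n) zK K (F j).
Proof.
have -> : \sum_(j < n) zK K (F j) = \sum_(0 <= j < n) zK K (F j) by rewrite big_mkord.
rewrite /sumZ /index_iota subn0.
elim: (iota 0 n) => [|a s IH] /=; first by rewrite big_nil.
by rewrite big_cons zKD IH.
Qed.

Lemma check_pt i k : (i < 128)%N -> (k < 128)%N ->
  zK K Nz * zK K (isem (ln7 (nth [::] W7 k)) (nth [::] W7 i)) =
  \sum_(j < 5) zK K (nth 0 (nth [::] Dcols k) j) * zK K (kz j (nth [::] W7 i))
  + \sum_(l < 13) zK K (nth 0 (nth [::] Mrows i) l) *
        zK K (idelta (isem (ln7 (nth [::] W7 k))) (nth [::] bas l)).
Proof.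
move=> Hi Hk.
have := check_ok; rewrite /check_fun => /allP /(_ i).
rewrite mem_iota add0n Hi => /(_ isT) /allP /(_ k).
rewrite mem_iota add0n Hk => /(_ isT) /eqP H.
have H2 := congr1 (zK K) H.
rewrite zKB zKM !zK_sumZ in H2.
have HL : nth 0 (nth [::] Lm i) k = isem (ln7 (nth [::] W7 k)) (nth [::] W7 i).
  by rewrite /Lm (nth_map [::]) ?size_W7 // (nth_map [::]) ?size_W7.
have HK : forall j, (j < 5)%N -> nth 0 (nth [::] Km i) j = kz j (nth [::] W7 i).
  move=> j Hj.
  by rewrite /Km (nth_map [::]) ?size_W7 // (nth_map 0%N) ?size_iota // nth_iota.
have HE : forall l, (l < 13)%N ->
    nth 0 (nth [::] Erows l) k = idelta (isem (ln7 (nth [::] W7 k))) (nth [::] bas l).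
  move=> l Hl.
  by rewrite /Erows (nth_map [::]) // (nth_map [::]) ?size_W7.
rewrite HL in H2.
have E1 : \sum_(j < 5) zK K (nth 0 (nth [::] Dcols k) j * nth 0 (nth [::] Km i) j)
   = \sum_(j < 5) zK K (nth 0 (nth [::] Dcols k) j) * zK K (kz j (nth [::] W7 i)).
  by apply: eq_bigr => j _; rewrite zKM HK.
have E2 : \sum_(l < 13) zK K (nth 0 (nth [::] Mrows i) l * nth 0 (nth [::] Erows l) k)
   = \sum_(l < 13) zK K (nth 0 (nth [::] Mrows i) l) *
        zK K (idelta (isem (ln7 (nth [::] W7 k))) (nth [::] bas l)).
  by apply: eq_bigr => l _; rewrite zKM HE.
rewrite E1 E2 in H2.
rewrite -H2.
by rewrite addrC subrK.
Qed.


Definition ksr (j : nat) : ser :=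
  match j with 0 => sem K tk0 | 1 => sem K tk1 | 2 => sem K tk2 | 3 => sem K tk3 | _ => g7 K end.

Lemma ksr_kz j : ksr j = fun w => zK K (kz j w).
Proof.
case: j => [|[|[|[|j]]]]; [exact: (sem_isem K tk0)|exact: (sem_isem K tk1)|exact: (sem_isem K tk2)|exact: (sem_isem K tk3)|].
apply: fe => w.
have -> : ksr j.+4 = sadd (sem K t5) (sscale (-1) (sem K t6)) by [].
by rewrite saddE sscaleE !sem_isem zKB mulN1r.
Qed.

Lemma ksr_gen j : lie_gen (gens5p5 (K:=K)) (ksr j).
Proof.
have Hx : lie_gen (gens5p5 (K:=K)) (sem K Lx) by apply: lie_gen_base; left.
have Hu : lie_gen (gens5p5 (K:=K)) (sem K Lu) by apply: lie_gen_base; right; left.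
case: j => [|[|[|[|j]]]] /=.
- change (lie_gen (gens5p5 (K:=K)) (sbr (sbr (sbr (sbr (sbr (sem K Lu) (sem K Lx)) (sem K Lx)) (sem K Lx)) (sem K Lx)) (sem K Lx))).
  by repeat (first [exact Hu | exact Hx | apply: lie_gen_br]).
- change (lie_gen (gens5p5 (K:=K)) (sbr (sbr (sbr (sbr (sem K Lu) (sem K Lx)) (sem K Lx)) (sem K Lx)) (sem K Lu))).
  by repeat (first [exact Hu | exact Hx | apply: lie_gen_br]).
- change (lie_gen (gens5p5 (K:=K)) (sbr (sbr (sbr (sbr (sem K Lu) (sem K Lx)) (sem K Lx)) (sem K Lu)) (sem K Lx))).
  by repeat (first [exact Hu | exact Hx | apply: lie_gen_br]).
- change (lie_gen (gens5p5 (K:=K)) (sbr (sbr (sbr (sem K Lu) (sem K Lx)) (sem K Lu)) (sem K Lu))).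
  by repeat (first [exact Hu | exact Hx | apply: lie_gen_br]).
- by apply: lie_gen_base; right; right.
Qed.

Lemma lie_sum (S : ser -> Prop) m (a : nat -> K) (F : nat -> ser) :
  (forall j, lie_gen S (F j)) -> lie_gen S (fun w => \sum_(j < m) a j * F j w).
Proof.
move=> HF; elim: m => [|m IH].
  have -> : (fun w => \sum_(j < 0) a j * F j w) = s0 K.
    by apply: fe => w; rewrite big_ord0.
  exact: lie_gen_zero.
have -> : (fun w => \sum_(j < m.+1) a j * F j w) =
   sadd (fun w => \sum_(j < m) a j * F j w) (sscale (a m) (F m)).
  by apply: fe => w; rewrite big_ord_recr saddE sscaleE.
by apply: lie_gen_add => //; apply: lie_gen_scale.
Qed.

Lemma kz_deg j w : size w != 7%N -> kz j w = 0.
Proof.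
move=> Hw; case: j => [|[|[|[|j]]]].
- exact: (@isem_deg tk0 w Hw).
- exact: (@isem_deg tk1 w Hw).
- exact: (@isem_deg tk2 w Hw).
- exact: (@isem_deg tk3 w Hw).
- change (isem t5 w - isem t6 w = 0).
  by rewrite (@isem_deg t5 w Hw) (@isem_deg t6 w Hw) subrr.
Qed.

Lemma hard_dir (hK : [pchar K] =i pred0) (f : ser) :
  freeLie f -> homog 7 f -> delta f = s0 K -> lie_gen (gens5p5 (K:=K)) f.
Proof.
move=> hfL hdeg Hd.
have Hsp : spanLN 7 f.
  have -> : f = trunc 7 f.
    apply: fe => w; rewrite /trunc; case: eqP => // Hw.
    by rewrite hdeg.
  exact: lie_trunc.
have [c Hc] := span_coef Hsp.
pose d' := fun j => \sum_(k < 128) c k * zK K (nth 0 (nth [::] Dcols k) j).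
have HNz : zK K Nz != 0.
  have -> : zK K Nz = 60%:R by [].
  by rewrite (proj1 (pcharf0P K) hK).
have HE : forall l, (l < 13)%N ->
   \sum_(k < 128) c k * zK K (idelta (isem (ln7 (nth [::] W7 k))) (nth [::] bas l)) = 0.
  move=> l _.
  have H := congr1 (fun g => g (nth [::] bas l)) Hd.
  rewrite /= Hc (delta_sum 128 c (fun k => sem K (ln7 (nth [::] W7 k)))) s0E in H.
  rewrite -[RHS]H; apply: eq_bigr => k _.
  by rewrite sem_isem delta_model.
have Hf : f = fun w => \sum_(j < 5) (d' j / zK K Nz) * ksr j w.
  apply: fe => w; case: (eqVneq (size w) 7%N) => Hw; last first.
    rewrite hdeg; last by apply/eqP.
    rewrite big1 // => j _.
    by rewrite ksr_kz kz_deg // mulr0.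
  have Hin : w \in W7 by rewrite mem_allw Hw.
  pose i := index w W7.
  have Hi : (i < 128)%N by rewrite -size_W7 index_mem.
  have Ew : nth [::] W7 i = w := nth_index [::] Hin.
  apply: (mulfI HNz).
  rewrite mulr_sumr.
  transitivity (\sum_(j < 5) d' j * zK K (kz j w)); last first.
    apply: eq_bigr => j _; rewrite ksr_kz; field.
    exact: HNz.
  rewrite Hc mulr_sumr.
  transitivity (\sum_(k < 128) c k * (zK K Nz * zK K (isem (ln7 (nth [::] W7 k)) w))).
    by apply: eq_bigr => k _; rewrite sem_isem; ring.
  rewrite -Ew.
  under eq_bigr => k _ do rewrite (check_pt Hi (ltn_ord k)) mulrDr.
  rewrite big_split /=.
  have Z2 : \sum_(k < 128) c k * (\sum_(l < 13) zK K (nth 0 (nth [::] Mrows i) l) *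
        zK K (idelta (isem (ln7 (nth [::] W7 k))) (nth [::] bas l))) = 0.
    under eq_bigr do rewrite mulr_sumr.
    rewrite exchange_big /=; apply: big1 => l _.
    transitivity (zK K (nth 0 (nth [::] Mrows i) l) *
       \sum_(k < 128) c k * zK K (idelta (isem (ln7 (nth [::] W7 k))) (nth [::] bas l))).
      by rewrite mulr_sumr; apply: eq_bigr => k _; ring.
    by rewrite HE // mulr0.
  rewrite Z2 addr0.
  under eq_bigr do rewrite mulr_sumr.
  rewrite exchange_big /=; apply: eq_bigr => j _.
  by rewrite /d' mulr_suml; apply: eq_bigr => k _; ring.
rewrite Hf; exact: (@lie_sum (gens5p5 (K:=K)) 5 (fun j => d' j / zK K Nz) ksr ksr_gen).
Qed.

End Final.


Section Easy.
Variable K : fieldType.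
Local Notation ser := (series K).
Local Notation fe := functional_extensionality.

Lemma delta_zero_deg (h : word -> Z) d :
  (forall u, size u != d -> h u = 0) -> all (fun w => idelta h w == 0) (allw d) ->
  delta (fun u => zK K (h u)) = s0 K.
Proof.
move=> Hh Hall; apply: fe => w; rewrite delta_model s0E.
case: (eqVneq (size w) d) => Hw.
  have Hin : w \in allw d by rewrite mem_allw Hw.
  by rewrite (eqP (allP Hall w Hin)).
rewrite (@idelta_ext h (fun _ => 0)) ?idelta0 // => u Hu.
by apply: Hh; rewrite Hu.
Qed.

Lemma easy_dir (f : ser) : lie_gen (gens5p5 (K:=K)) f -> delta f = s0 K.
Proof.
elim=> [q Hq||p q _ Hp _ Hq|c p _ Hp|p q _ Hp _ Hq].
- case: Hq => [->|[->|->]].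
  + change (delta (sem K Lx) = s0 K); rewrite sem_isem.
    apply: (@delta_zero_deg _ 1); [by move=> u Hu; apply: isem_deg | by vm_compute].
  + change (delta (sem K Lu) = s0 K); rewrite sem_isem.
    apply: (@delta_zero_deg _ 2); [by move=> u Hu; apply: isem_deg | by vm_compute].
  + change (delta (ksr K 4) = s0 K); rewrite ksr_kz.
    apply: (@delta_zero_deg _ 7); [by move=> u Hu; apply: kz_deg | by vm_compute].
- by apply: fe => w; rewrite /delta s0E big1 // => i _; rewrite s0E.
- by rewrite deltaD Hp Hq; apply: fe => w; rewrite saddE s0E addr0.
- by rewrite deltaZ Hp; apply: fe => w; rewrite sscaleE s0E mulr0.
- rewrite sbr_def deltaD deltaZ !delta_smul Hp Hq !smul0l !smul0r.
  by apply: fe => w; rewrite !(saddE, sscaleE, s0E); ring.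
Qed.

End Easy.

Unset Implicit Arguments.
Theorem proposition5p5 (K : fieldType) (hK : [pchar K] =i pred0)
  (f : series K) (hfL : freeLie f) (hf0 : f <> s0 K) (hdeg : homog 7 f) :
  delta f = s0 K <-> lie_gen (gens5p5 (K:=K)) f.
Proof.
split; first exact: hard_dir.
exact: easy_dir.
Qed.
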